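(* Let $R_e\approx1.4877$ be the unique positive root of $\frac{10}{7(R+1)}-\frac{R^2\sqrt{R}}{R^2+R+1}=0$. Then for all $0<x,y,z<R_e$, $$2d_0(y,z)+\tfrac{7}{10}\sqrt{y}\,d_1(y,z)-\tfrac{51}{100}\sqrt{yz}\,d_2(y,z)+\tfrac{10}{7}\sqrt{x}\,d_1(x,y)+\sqrt{xy}\,d_2(x,y)>\tfrac{1}{50}.$$
   Context: For $x,y\ge0$: $d_0(x,y)=\frac{1+2x}{1+x}+\frac{xy}{1+y+xy}$, $d_1(x,y)=-\frac{x}{1+x}-\frac{xy}{1+y+xy}-\frac{xy^2}{1+y+xy}\frac{1+x}{1+y}$, $d_2(x,y)=\frac{xy^2}{1+y+xy}\frac{1+x}{1+y}$. *)

(* Defs.v *)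
From Stdlib Require Import Reals.
Open Scope R_scope.

Definition d0 (x y : R) : R :=
  (1 + 2 * x) / (1 + x) + x * y / (1 + y + x * y).

Definition d1 (x y : R) : R :=
  - (x / (1 + x)) - x * y / (1 + y + x * y)
  - (x * y ^ 2 / (1 + y + x * y)) * ((1 + x) / (1 + y)).

Definition d2 (x y : R) : R :=
  (x * y ^ 2 / (1 + y + x * y)) * ((1 + x) / (1 + y)).

Definition fRe (r : R) : R :=
  10 / (7 * (r + 1)) - r ^ 2 * sqrt r / (r ^ 2 + r + 1).

(* Main.v *)
Require Import Defs.
From Stdlib Require Import Reals Lra Lia Psatz QArith Qreals.
Open Scope R_scope.

Definition gR (y:R) := y/(1+y).
Definition hR (y:R) := (1+2*y)/(1+y).
Definition QfR (y z:R) := y*z/(1+z+y*z).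
Definition PR a b c := 2*hR (b*b) + 2*QfR (b*b) (c*c) + a*b*Defs.d2 (a*a) (b*b).
Definition NR a b c := 7/10*b*(gR (b*b) + QfR (b*b) (c*c) + Defs.d2 (b*b) (c*c))
  + 51/100*b*c*Defs.d2 (b*b) (c*c) + 10/7*a*(gR (a*a) + QfR (a*a) (b*b) + Defs.d2 (a*a) (b*b)).

Lemma div_le (n1 e1 n2 e2: R): 0<e1 -> 0<e2 -> n1*e2 <= n2*e1 -> n1/e1 <= n2/e2.
Proof.
  intros H1 H2 H.
  replace (n1/e1) with ((n1*e2)*/(e1*e2)) by (field; lra).
  replace (n2/e2) with ((n2*e1)*/(e1*e2)) by (field; lra).
  apply Rmult_le_compat_r; [apply Rlt_le, Rinv_0_lt_compat; nra | exact H].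
Qed.

Lemma d2_eq y z : 0 <= y -> 0 <= z -> Defs.d2 y z = y*(z*z)*(1+y)/((1+z+y*z)*(1+z)).
Proof. intros; unfold Defs.d2; field; split; nra. Qed.

Lemma g_mono y1 y2 : 0 <= y1 <= y2 -> gR y1 <= gR y2.
Proof. intros; unfold gR; apply div_le; nra. Qed.
Lemma h_mono y1 y2 : 0 <= y1 <= y2 -> hR y1 <= hR y2.
Proof. intros; unfold hR; apply div_le; nra. Qed.
Lemma Qf_mono y1 y2 z1 z2 : 0 <= y1 <= y2 -> 0 <= z1 <= z2 -> QfR y1 z1 <= QfR y2 z2.
Proof.
  intros Hy Hz. apply Rle_trans with (QfR y2 z1); unfold QfR; apply div_le; try nra.
Qed.
Lemma d2_mono y1 y2 z1 z2 : 0 <= y1 <= y2 -> 0 <= z1 <= z2 -> Defs.d2 y1 z1 <= Defs.d2 y2 z2.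
Proof.
  intros Hy Hz. apply Rle_trans with (Defs.d2 y2 z1); rewrite !d2_eq by lra; apply div_le; try nra.
  - assert (0 <= z1*z1*(1+z1)) by nra.
    assert (y1*(1+y1)*(1+z1+y2*z1) <= y2*(1+y2)*(1+z1+y1*z1)).
    { assert (y1*(1+y1) <= y2*(1+y2)) by nra.
      assert (0 <= y1*y2*z1) by (apply Rmult_le_pos; nra).
      nra. }
    assert (0 <= (z1*z1*(1+z1)) * (y2*(1+y2)*(1+z1+y1*z1) - y1*(1+y1)*(1+z1+y2*z1))) by (apply Rmult_le_pos; lra).
    nra.
  - assert (0 <= y2*(1+y2)) by nra.
    assert (z1*z1*((1+z2+y2*z2)*(1+z2)) <= z2*z2*((1+z1+y2*z1)*(1+z1))).
    { assert (E1: z1*(1+z2) <= z2*(1+z1)) by nra.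
      assert (E2: z1*(1+z2+y2*z2) <= z2*(1+z1+y2*z1)) by (ring_simplify; nra).
      assert (E3: 0 <= z1*(1+z2)) by nra.
      assert (E4: 0 <= z1*(1+z2+y2*z2)) by (apply Rmult_le_pos; nra).
      pose proof (Rmult_le_compat _ _ _ _ E3 E4 E1 E2).
      nra. }
    assert (0 <= (y2*(1+y2)) * (z2*z2*((1+z1+y2*z1)*(1+z1)) - z1*z1*((1+z2+y2*z2)*(1+z2)))) by (apply Rmult_le_pos; lra).
    nra.
Qed.
Lemma d2_nonneg y z : 0 <= y -> 0 <= z -> 0 <= Defs.d2 y z.
Proof. intros. rewrite d2_eq by lra. apply Rle_mult_inv_pos; [|apply Rmult_lt_0_compat]; nra. Qed.
Lemma g_nonneg y : 0 <= y -> 0 <= gR y.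
Proof. intros; unfold gR; apply Rle_mult_inv_pos; nra. Qed.
Lemma Qf_nonneg y z : 0 <= y -> 0 <= z -> 0 <= QfR y z.
Proof. intros; unfold QfR; apply Rle_mult_inv_pos; nra. Qed.

Lemma sq_mono a1 a2 : 0 <= a1 <= a2 -> 0 <= a1*a1 <= a2*a2.
Proof. intros; split; nra. Qed.

Lemma PR_mono a1 a2 b1 b2 c1 c2 : 0 <= a1 <= a2 -> 0 <= b1 <= b2 -> 0 <= c1 <= c2 ->
  PR a1 b1 c1 <= PR a2 b2 c2.
Proof.
  intros Ha Hb Hc. pose proof (sq_mono _ _ Ha). pose proof (sq_mono _ _ Hb). pose proof (sq_mono _ _ Hc).
  unfold PR.
  pose proof (h_mono _ _ H0). pose proof (Qf_mono _ _ _ _ H0 H1).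
  pose proof (d2_mono _ _ _ _ H H0). pose proof (d2_nonneg (a1*a1) (b1*b1) ltac:(lra) ltac:(lra)).
  assert (a1*b1*Defs.d2 (a1*a1) (b1*b1) <= a2*b2*Defs.d2 (a2*a2) (b2*b2)).
  { apply Rmult_le_compat; try nra. }
  lra.
Qed.

Lemma NR_mono a1 a2 b1 b2 c1 c2 : 0 <= a1 <= a2 -> 0 <= b1 <= b2 -> 0 <= c1 <= c2 ->
  NR a1 b1 c1 <= NR a2 b2 c2.
Proof.
  intros Ha Hb Hc. pose proof (sq_mono _ _ Ha). pose proof (sq_mono _ _ Hb). pose proof (sq_mono _ _ Hc).
  unfold NR.
  pose proof (g_mono _ _ H0). pose proof (Qf_mono _ _ _ _ H0 H1).
  pose proof (d2_mono _ _ _ _ H0 H1).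
  pose proof (g_mono _ _ H). pose proof (Qf_mono _ _ _ _ H H0).
  pose proof (d2_mono _ _ _ _ H H0).
  pose proof (g_nonneg (b1*b1) ltac:(lra)). pose proof (Qf_nonneg (b1*b1) (c1*c1) ltac:(lra) ltac:(lra)).
  pose proof (d2_nonneg (b1*b1) (c1*c1) ltac:(lra) ltac:(lra)).
  pose proof (g_nonneg (a1*a1) ltac:(lra)). pose proof (Qf_nonneg (a1*a1) (b1*b1) ltac:(lra) ltac:(lra)).
  pose proof (d2_nonneg (a1*a1) (b1*b1) ltac:(lra) ltac:(lra)).
  assert (7/10*b1*(gR (b1*b1) + QfR (b1*b1) (c1*c1) + Defs.d2 (b1*b1) (c1*c1)) <=
          7/10*b2*(gR (b2*b2) + QfR (b2*b2) (c2*c2) + Defs.d2 (b2*b2) (c2*c2))).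
  { apply Rmult_le_compat; try nra. }
  assert (51/100*b1*c1*Defs.d2 (b1*b1) (c1*c1) <= 51/100*b2*c2*Defs.d2 (b2*b2) (c2*c2)).
  { apply Rmult_le_compat; try nra. }
  assert (10/7*a1*(gR (a1*a1) + QfR (a1*a1) (b1*b1) + Defs.d2 (a1*a1) (b1*b1)) <=
          10/7*a2*(gR (a2*a2) + QfR (a2*a2) (b2*b2) + Defs.d2 (a2*a2) (b2*b2))).
  { apply Rmult_le_compat; try nra. }
  lra.
Qed.

Definition gQ (y:Q) : Q := Qred (y/(1+y)).
Definition hQ (y:Q) : Q := Qred ((1+2*y)/(1+y)).
Definition QfQ (y z:Q) : Q := Qred (y*z/(1+z+y*z)).
Definition dQ (x y:Q) : Q := Qred (x*(y*y)*(1+x)/((1+y+x*y)*(1+y))).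
Definition PQ (a b c:Q) : Q := 2*hQ (b*b) + 2*QfQ (b*b) (c*c) + a*b*dQ (a*a) (b*b).
Definition NQ (a b c:Q) : Q := (7#10)*b*(gQ (b*b) + QfQ (b*b) (c*c) + dQ (b*b) (c*c))
  + (51#100)*b*c*dQ (b*b) (c*c) + (10#7)*a*(gQ (a*a) + QfQ (a*a) (b*b) + dQ (a*a) (b*b)).

Lemma Q2R_div' x y : Q2R y <> 0 -> Q2R (x/y) = Q2R x / Q2R y.
Proof.
  intro H. apply Q2R_div. intro E. apply H. rewrite (Qeq_eqR _ _ E). unfold Q2R; simpl; field.
Qed.
Lemma Q1 : Q2R 1 = 1. Proof. unfold Q2R; simpl; field. Qed.
Lemma Q2 : Q2R 2 = 2. Proof. unfold Q2R; simpl; field. Qed.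
Lemma Q710 : Q2R (7#10) = 7/10. Proof. unfold Q2R; simpl; field. Qed.
Lemma Q51 : Q2R (51#100) = 51/100. Proof. unfold Q2R; simpl; field. Qed.
Lemma Q107 : Q2R (10#7) = 10/7. Proof. unfold Q2R; simpl; field. Qed.

Ltac qr := repeat (rewrite ?Q2R_plus, ?Q2R_mult, ?Q2R_minus, ?Q1, ?Q2, ?Q710, ?Q51, ?Q107).

Lemma gQ_ok y : 0 <= Q2R y -> Q2R (gQ y) = gR (Q2R y).
Proof. intros; unfold gQ; rewrite (Qeq_eqR _ _ (Qred_correct _)); unfold gR. rewrite Q2R_div'; qr; [reflexivity|lra]. Qed.
Lemma hQ_ok y : 0 <= Q2R y -> Q2R (hQ y) = hR (Q2R y).
Proof. intros; unfold hQ; rewrite (Qeq_eqR _ _ (Qred_correct _)); unfold hR. rewrite Q2R_div'; qr; [reflexivity|lra]. Qed.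
Lemma QfQ_ok y z : 0 <= Q2R y -> 0 <= Q2R z -> Q2R (QfQ y z) = QfR (Q2R y) (Q2R z).
Proof. intros; unfold QfQ; rewrite (Qeq_eqR _ _ (Qred_correct _)); unfold QfR. rewrite Q2R_div'; qr; [reflexivity|nra]. Qed.
Lemma dQ_ok y z : 0 <= Q2R y -> 0 <= Q2R z -> Q2R (dQ y z) = Defs.d2 (Q2R y) (Q2R z).
Proof.
  intros; unfold dQ; rewrite (Qeq_eqR _ _ (Qred_correct _)). unfold Defs.d2.
  rewrite Q2R_div'; qr; try nra. field. nra.
Qed.
Lemma sqnn b : 0 <= Q2R (b*b)%Q.
Proof. rewrite Q2R_mult; nra. Qed.

Lemma PQ_ok a b c : Q2R (PQ a b c) = PR (Q2R a) (Q2R b) (Q2R c).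
Proof.
  unfold PQ, PR. qr. rewrite hQ_ok, QfQ_ok, dQ_ok by apply sqnn. rewrite !Q2R_mult. reflexivity.
Qed.
Lemma NQ_ok a b c : Q2R (NQ a b c) = NR (Q2R a) (Q2R b) (Q2R c).
Proof.
  unfold NQ, NR. qr. rewrite !gQ_ok, !QfQ_ok, !dQ_ok by apply sqnn. rewrite !Q2R_mult. reflexivity.
Qed.

Definition mid (a b : Q) : Q := Qred ((a+b)*(1#2)).
Lemma mid_ok a b : Q2R (mid a b) = (Q2R a + Q2R b)/2.
Proof. unfold mid. rewrite (Qeq_eqR _ _ (Qred_correct _)). qr. unfold Q2R at 3; simpl. field. Qed.

Inductive tr := L | A0 (l r : tr) | A1 (l r : tr) | A2 (l r : tr).

Fixpoint chk (t : tr) (a1 a2 b1 b2 c1 c2 : Q) : bool :=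
  match t with
  | L => negb (Qle_bool (PQ a1 b1 c1 - NQ a2 b2 c2) (1#50))
  | A0 l r => chk l a1 (mid a1 a2) b1 b2 c1 c2 && chk r (mid a1 a2) a2 b1 b2 c1 c2
  | A1 l r => chk l a1 a2 b1 (mid b1 b2) c1 c2 && chk r a1 a2 (mid b1 b2) b2 c1 c2
  | A2 l r => chk l a1 a2 b1 b2 c1 (mid c1 c2) && chk r a1 a2 b1 b2 (mid c1 c2) c2
  end.

Lemma Q150 : Q2R (1#50) = 1/50. Proof. unfold Q2R; simpl; field. Qed.

Lemma chk_sound t : forall a1 a2 b1 b2 c1 c2, chk t a1 a2 b1 b2 c1 c2 = true ->
  forall a b c, 0 <= Q2R a1 -> 0 <= Q2R b1 -> 0 <= Q2R c1 ->
  Q2R a1 <= a <= Q2R a2 -> Q2R b1 <= b <= Q2R b2 -> Q2R c1 <= c <= Q2R c2 ->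
  PR a b c - NR a b c > 1/50.
Proof.
  induction t as [| l IHl r IHr | l IHl r IHr | l IHl r IHr]; intros a1 a2 b1 b2 c1 c2 H a b c Ha1 Hb1 Hc1 Ha Hb Hc; simpl in H.
  - apply Bool.negb_true_iff in H.
    assert (Hlt : (1#50 < PQ a1 b1 c1 - NQ a2 b2 c2)%Q).
    { apply Qnot_le_lt. intro E. apply Qle_bool_iff in E. congruence. }
    apply Qlt_Rlt in Hlt. rewrite Q2R_minus, PQ_ok, NQ_ok, Q150 in Hlt.
    pose proof (PR_mono (Q2R a1) a (Q2R b1) b (Q2R c1) c ltac:(lra) ltac:(lra) ltac:(lra)).
    pose proof (NR_mono a (Q2R a2) b (Q2R b2) c (Q2R c2) ltac:(lra) ltac:(lra) ltac:(lra)).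
    lra.
  - apply andb_prop in H as [H1 H2]. pose proof (mid_ok a1 a2).
    destruct (Rle_or_lt a (Q2R (mid a1 a2))).
    + apply (IHl _ _ _ _ _ _ H1); lra.
    + apply (IHr _ _ _ _ _ _ H2); lra.
  - apply andb_prop in H as [H1 H2]. pose proof (mid_ok b1 b2).
    destruct (Rle_or_lt b (Q2R (mid b1 b2))).
    + apply (IHl _ _ _ _ _ _ H1); lra.
    + apply (IHr _ _ _ _ _ _ H2); lra.
  - apply andb_prop in H as [H1 H2]. pose proof (mid_ok c1 c2).
    destruct (Rle_or_lt c (Q2R (mid c1 c2))).
    + apply (IHl _ _ _ _ _ _ H1); lra.
    + apply (IHr _ _ _ _ _ _ H2); lra.
Qed.

Definition theTree : tr := (A1 (A1 L (A1 L L)) (A1 (A1 (A2 (A1 L L) (A1 L L)) (A2 (A2 (A1 L (A1 L (A0 L L))) (A1 L (A2 (A1 L L) (A1 L L)))) (A2 (A1 L (A2 (A1 L L) (A1 L L))) (A1 (A1 L L) (A1 (A2 L L) (A2 (A0 L L) (A0 L (A0 L L)))))))) (A2 (A1 (A2 (A1 (A0 L (A0 L (A0 L L))) (A0 L (A0 L (A0 L L)))) (A2 (A1 (A1 (A0 L L) (A0 L (A0 L L))) (A0 L (A0 L (A0 L L)))) (A1 (A2 (A1 L (A0 L L)) (A1 L (A0 L L))) (A2 (A0 L (A0 L L)) (A0 L (A0 L L)))))) (A2 (A0 L (A0 L (A0 L (A1 L (A0 L L))))) (A2 (A1 (A0 L (A0 L (A0 L L))) (A0 L (A0 L (A0 L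 L)))) (A1 (A0 L (A0 L (A0 L L))) (A0 L (A0 L (A0 L (A0 L L)))))))) (A1 (A2 (A1 (A2 (A1 (A2 L L) (A0 L (A0 L L))) (A1 (A0 L (A0 L L)) (A0 L (A0 L L)))) (A2 (A0 L (A0 L (A0 L L))) (A1 (A0 L (A0 L L)) (A0 L (A0 L (A0 L L)))))) (A1 (A1 (A2 (A0 L (A0 L L)) (A0 L (A0 L L))) (A2 (A0 L (A0 L L)) (A0 L (A0 L (A0 L L))))) (A1 (A2 (A0 L (A0 L (A0 L L))) (A0 L (A0 L (A0 L (A0 L L))))) (A0 L (A0 L (A0 L (A0 L (A2 L L)))))))) (A2 (A1 (A2 (A0 L (A0 L (A0 L (A0 L L)))) (A0 L (A0 L (A0 L (A0 L L))))) (A2 (A0 L (A0 L (A0 L (A0 L L)))) (A0 L (A0 L (A0 L (A0 L (A1 L L))))))) (A1 (A0 L (A0 L (A0 L (A0 (A1 L L) (A1 (A2 L (A0 L L)) (A0 L (A2 L (A1 L (A0 L L))))))))) (A0 L (A0 L (A0 (A0 L L) (A0 (A1 (A2 L L) (A0 L (A2 L L))) (A1 (A0 (A2 L (A1 L L)) (A2 L (A1 (A0 L (A1 L L)) (A0 L (A1 L (A2 L L)))))) (A0 (A2 L (A1 (A0 L L) (A0 L (A1 L L)))) (A2 (A1 L (A0 L L)) (A1 (A0 (A1 L L) (A1 (A2 L (A0 L L)) (A2 L (A0 L (A1 L L))))) (A0 (A1 (A2 L L) (A2 L (A0 L L))) (A1 (A2 L (A0 L (A1 (A2 L L) (A2 L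 L)))) (A2 L (A0 (A1 L (A2 L L)) (A1 (A2 L (A0 L L)) (A2 L (A0 L (A1 L (A2 L L))))))))))))))))))))))).
Lemma tree_ok : chk theTree 0 (61#50) 0 (61#50) 0 (61#50) = true.
Proof. reflexivity. Qed.

Lemma Re_bound (Re : R) : 0 < Re -> fRe Re = 0 -> sqrt Re < 61/50.
Proof.
  intros Hp Hf. set (t := sqrt Re).
  assert (Ht : Re = t*t) by (symmetry; apply sqrt_sqrt; lra).
  assert (E : 10/(7*(Re+1)) = Re^2*t/(Re^2+Re+1)) by (unfold fRe in Hf; fold t in Hf; lra).
  assert (E2: 10*(Re^2+Re+1) = 7*(Re+1)*(Re^2*t)).
  { replace (10*(Re^2+Re+1)) with (10/(7*(Re+1)) * (7*(Re+1)*(Re^2+Re+1))) by (field; lra).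
    rewrite E. field. nra. }
  rewrite Ht in E2.
  destruct (Rlt_or_le t (61/50)) as [|Hge]; [assumption|exfalso].
  assert (H3: 7*(t*t*t) - 10 >= 7*((61/50)^3) - 10).
  { assert (t*t >= (61/50)*(61/50)) by nra. assert (t*t*t >= (61/50)*(61/50)*(61/50)) by nra. nra. }
  assert (H4: t*t*t*t >= (61/50)^4) by (assert (t*t >= (61/50)*(61/50)) by nra; nra).
  assert (H2: t*t >= (61/50)^2) by nra.
  assert (0 <= 7*((61/50)^3) - 10) by lra.
  assert (t*t*t*t*(7*(t*t*t)-10) >= (61/50)^4 * (7*((61/50)^3) - 10)) by nra.
  assert (t*t*(7*(t*t*t)-10) >= (61/50)^2 * (7*((61/50)^3) - 10)) by nra.
  nra.
Qed.

Lemma Q0 : Q2R 0 = 0. Proof. unfold Q2R; simpl; field. Qed.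
Lemma QS : Q2R (61#50) = 61/50. Proof. unfold Q2R; simpl; field. Qed.

Theorem lemmaA2 (Re : R)
  (hRe_pos : 0 < Re) (hRe_root : fRe Re = 0)
  (hRe_unique : forall r : R, 0 < r -> fRe r = 0 -> r = Re)
  (x y z : R)
  (hx : 0 < x < Re) (hy : 0 < y < Re) (hz : 0 < z < Re) :
  2 * Defs.d0 y z + 7 / 10 * sqrt y * Defs.d1 y z - 51 / 100 * sqrt (y * z) * Defs.d2 y z
  + 10 / 7 * sqrt x * Defs.d1 x y + sqrt (x * y) * Defs.d2 x y > 1 / 50.
Proof.
  pose proof (Re_bound Re hRe_pos hRe_root) as HB.
  assert (Ha : sqrt x < 61/50) by (apply Rlt_trans with (sqrt Re); [apply sqrt_lt_1; lra|exact HB]).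
  assert (Hb : sqrt y < 61/50) by (apply Rlt_trans with (sqrt Re); [apply sqrt_lt_1; lra|exact HB]).
  assert (Hc : sqrt z < 61/50) by (apply Rlt_trans with (sqrt Re); [apply sqrt_lt_1; lra|exact HB]).
  rewrite (sqrt_mult y z), (sqrt_mult x y) by lra.
  pose proof (sqrt_pos x). pose proof (sqrt_pos y). pose proof (sqrt_pos z).
  pose proof (sqrt_sqrt x ltac:(lra)). pose proof (sqrt_sqrt y ltac:(lra)). pose proof (sqrt_sqrt z ltac:(lra)).
  remember (sqrt x) as a. remember (sqrt y) as b. remember (sqrt z) as c.
  rewrite <- H2, <- H3, <- H4.
  assert (Hs := chk_sound theTree _ _ _ _ _ _ tree_ok a b c).
  rewrite Q0, QS in Hs.
  assert (Hm : PR a b c - NR a b c > 1/50) by (apply Hs; lra).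
  match goal with |- ?L > _ => replace L with (PR a b c - NR a b c); [exact Hm|] end.
  unfold PR, NR, hR, gR, QfR, Defs.d0, Defs.d1, Defs.d2. ring.
Qed.
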